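(* Let $(M,S)$ be a spin$^c$ pair in standard form, with diagonal blocks of degrees $k,l,r$ ($k+l=|S|$, $n=k+l+r$), and let $k+l<m\le n$. Then there is $a\in\{2,3\}$ such that the $m$-th row of $M$ has the form $M_m=[\,a,\dots,a,\ \bar a,\dots,\bar a,\ *\,]$ (first $k$ entries equal to $a$, next $l$ entries equal to $\bar a$), and $k\cdot a+l\cdot\bar a+(k-l-1)\cdot 2=a$ in $\mathcal S$ (integer multiples taken in the $\mathbb Z_2$-vector space $\mathcal S$).
   Context: $\mathcal S=\{0,1,2,3\}$ is the Klein four-group ($\mathbb Z_2$-vector space) with $x+x=0$, $1+2=3$, $1+3=2$, $2+3=1$; conjugation is the involution $\bar0=0,\bar1=1,\bar2=3,\bar3=2$. $\mathcal P_n$ is the power set of $\{1,\dots,n\}$ (addition = symmetric difference); $|U|_2=|U|\bmod2$; $J_M(U)=\{j:\sum_{i\in U}M_{ij}=1\}$; $r_i^S(M)=\sum_{j\in S}M_{ij}$. $(M,S)$ is a spin$^c$ pair if $|(J_M(U)+U)\cap S|_2=\binom{|U|}2\bmod 2$ for all $U\in\mathcal P_n$. A square matrix is distinguished if it has $1$ on the diagonal and $2$ or $3$ off it; self-conjugate if $A^t=\overline A$. A spin$^c$ pair $(M,S)$ is in standard form if: (i) $S=\{1,\dots,|S|\}$; (ii) the first row of $M$ is $[1,2,\dots,2]$; (iii) $M$ is distinguished with block form $\begin{bmatrix}A&2&*\\2&B&*\\ *&*&*\end{bmatrix}$ with diagonal blocks of degrees $k,l,r$ (the blocks marked $2$ have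 all entries $2$); (iv) $k\ge l$ and $k+l=|S|$; (v) $A,B$ are self-conjugate; (vi) $r_1^S(M)=\dots=r_k^S(M)\ne r_{k+1}^S(M)=\dots=r_{k+l}^S(M)$ (possibly $l=0$). *)

(* Defs.v *)
From mathcomp Require Import all_boot all_order all_algebra.
Set Implicit Arguments. Unset Strict Implicit. Unset Printing Implicit Defensive.

(* The Klein four-group S = {0,1,2,3}, carried by 'I_4. *)
Definition K4 := 'I_4.

Definition k0 : K4 := inord 0.
Definition k1 : K4 := inord 1.
Definition k2 : K4 := inord 2.
Definition k3 : K4 := inord 3.

(* addition table on values: x+x=0, 0 neutral, 1+2=3, 1+3=2, 2+3=1 *)
Definition kadd_nat (a b : nat) : nat :=
  if a == b then 0%N else if a == 0%N then b else if b == 0%N then a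
  else (6 - a - b)%N.

Definition kadd (x y : K4) : K4 := inord (kadd_nat x y).

Definition kconj (x : K4) : K4 :=
  if val x == 2%N then k3 else if val x == 3%N then k2 else x.

Definition kmulz (z : int) (x : K4) : K4 := if odd `|z|%N then x else k0.

Definition ksum (I : finType) (A : {set I}) (F : I -> K4) : K4 :=
  \big[kadd/k0]_(i in A) F i.

Definition symdiff (T : finType) (A B : {set T}) : {set T} :=
  (A :\: B) :|: (B :\: A).

Definition JM n (M : 'M[K4]_n) (U : {set 'I_n}) : {set 'I_n} :=
  [set j | ksum U (fun i => M i j) == k1].

Definition rS n (M : 'M[K4]_n) (S : {set 'I_n}) (i : 'I_n) : K4 :=
  ksum S (fun j => M i j).

Definition spinc_pair n (M : 'M[K4]_n) (S : {set 'I_n}) : Prop :=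
  forall U : {set 'I_n},
    odd #|symdiff (JM M U) U :&: S| = odd 'C(#|U|, 2).

(* Standard form with diagonal block degrees k, l, r (indices are 0-based:
   the paper's index i corresponds to the ordinal of value i-1). *)
Definition standard_form n (M : 'M[K4]_n) (S : {set 'I_n}) (k l r : nat) : Prop :=
  spinc_pair M S /\
  n = (k + l + r)%N /\
  S = [set i : 'I_n | (val i < #|S|)%N] /\
  [/\
      (forall i j : 'I_n, val i = 0%N ->
          M i j = if val j == 0%N then k1 else k2),
      [/\ (forall i : 'I_n, M i i = k1),
          (forall i j : 'I_n, i != j -> M i j = k2 \/ M i j = k3) &
          (forall i j : 'I_n, (i < k)%N -> (k <= j < k + l)%N ->
              M i j = k2 /\ M j i = k2)],
      (l <= k)%N /\ (k + l)%N = #|S|,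
      (forall i j : 'I_n, (i < k)%N -> (j < k)%N -> M j i = kconj (M i j)) /\
      (forall i j : 'I_n, (k <= i < k + l)%N -> (k <= j < k + l)%N ->
          M j i = kconj (M i j)) &
      [/\ (forall i j : 'I_n, (i < k)%N -> (j < k)%N -> rS M S i = rS M S j),
          (forall i j : 'I_n, (k <= i < k + l)%N -> (k <= j < k + l)%N ->
              rS M S i = rS M S j) &
          (forall i j : 'I_n, (i < k)%N -> (k <= j < k + l)%N ->
              rS M S i != rS M S j)]].

(* Main.v *)
Require Import Defs.
From mathcomp Require Import all_boot all_order all_algebra zify.
Definition phi1 (x : K4) : bool := (val x == 1%N) || (val x == 3%N).
Definition phi2 (x : K4) : bool := (val x == 2%N) || (val x == 3%N).
Lemma val_kadd x y : val (kadd x y) = kadd_nat x y.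
Proof. rewrite /kadd /= inordK //; case: x => [[|[|[|[|?]]]] Hx] //; case: y => [[|[|[|[|?]]]] Hy] //. Qed.
Lemma phi1_add x y : phi1 (kadd x y) = phi1 x (+) phi1 y.
Proof. rewrite /phi1 val_kadd.
case: x => [[|[|[|[|?]]]] Hx] //; case: y => [[|[|[|[|?]]]] Hy] //.
Qed.
Lemma phi2_add x y : phi2 (kadd x y) = phi2 x (+) phi2 y.
Proof. rewrite /phi2 val_kadd.
case: x => [[|[|[|[|?]]]] Hx] //; case: y => [[|[|[|[|?]]]] Hy] //.
Qed.
Lemma phi_inj x y : phi1 x = phi1 y -> phi2 x = phi2 y -> x = y.
Proof.
case: x => [[|[|[|[|?]]]] Hx] //; case: y => [[|[|[|[|?]]]] Hy] // _ _; exact: val_inj.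
Qed.
Lemma vk0 : val k0 = 0%N. Proof. by rewrite /k0 /= inordK. Qed.
Lemma vk1 : val k1 = 1%N. Proof. by rewrite /k1 /= inordK. Qed.
Lemma vk2 : val k2 = 2%N. Proof. by rewrite /k2 /= inordK. Qed.
Lemma vk3 : val k3 = 3%N. Proof. by rewrite /k3 /= inordK. Qed.
Lemma sumodd (I : finType) (A : {set I}) (P : pred I) :
  \big[addb/false]_(t in A) P t = odd #|[set t in A | P t]|.
Proof.
rewrite -sum1dep_card (big_morph odd oddD (erefl : odd 0 = false)) /=.
rewrite big_mkcondr /=; apply: eq_bigr => t _; by case: (P t).
Qed.


Lemma phi1_k0 : phi1 k0 = false. Proof. by rewrite /phi1 vk0. Qed.
Lemma phi2_k0 : phi2 k0 = false. Proof. by rewrite /phi2 vk0. Qed.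
Lemma phi1_sum (I : finType) (A : {set I}) F :
  phi1 (ksum A F) = \big[addb/false]_(i in A) phi1 (F i).
Proof. exact: (big_morph phi1 phi1_add phi1_k0). Qed.
Lemma phi2_sum (I : finType) (A : {set I}) F :
  phi2 (ksum A F) = \big[addb/false]_(i in A) phi2 (F i).
Proof. exact: (big_morph phi2 phi2_add phi2_k0). Qed.
Lemma eq_k1 x : (x == k1) = phi1 x && ~~ phi2 x.
Proof.
apply/eqP/idP => [->|]; first by rewrite /phi1 /phi2 vk1.
move=> /andP[h1 /negbTE h2]; apply: phi_inj; by rewrite ?h1 ?h2 /phi1 /phi2 vk1.
Qed.
Lemma iter_addb n b : iter n (addb b) false = odd n && b.
Proof. by elim: n => //= n ->; case: b; case: (odd n). Qed.
Lemma odd_klz (k l : nat) : (l <= k)%N ->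
  odd `|(k%:Z - l%:Z - 1)%R|%N = ~~ (odd k (+) odd l).
Proof.
rewrite leq_eqVlt => /orP[/eqP->|lk].
  have -> : (k%:Z - k%:Z - 1 = - (1%:Z))%R by lia.
  by rewrite abszN /=; case: (odd k).
have -> : (k%:Z - l%:Z - 1 = (k - l.+1)%:Z)%R by lia.
rewrite absz_nat oddB //=; by case: (odd k); case: (odd l).
Qed.

Theorem mainTheorem13 (n : nat) (M : 'M[K4]_n) (S : {set 'I_n}) (k l r : nat)
  (HM : standard_form M S k l r) (m : 'I_n) (Hm : (k + l <= m)%N) :
  exists a : K4, (a = k2 \/ a = k3) /\
    (forall j : 'I_n, (j < k)%N -> M m j = a) /\
    (forall j : 'I_n, (k <= j < k + l)%N -> M m j = kconj a) /\
    kadd (kadd (kmulz k%:Z a) (kmulz l%:Z (kconj a)))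
         (kmulz (k%:Z - l%:Z - 1)%R k2) = a.
Proof.
case: HM => Hsp [Hn [HS [Hrow0 [Hdiag Hoff HAB] [Hlk HkS] _ [HrA HrB HrAB]]]].
have inS : forall t : 'I_n, (t \in S) = (t < k + l)%N.
  by move=> t; rewrite {1}HS inE HkS.
have mS : (m \in S) = false by rewrite inS ltnNge Hm.
have phi2off : forall i j, i != j -> phi2 (M i j).
  by move=> i j /Hoff [->|->]; rewrite /phi2 ?vk2 ?vk3.
have phi1off : forall i j, i != j -> M i j = if phi1 (M i j) then k3 else k2.
  by move=> i j /Hoff [->|->]; rewrite /phi1 ?vk2 ?vk3.
have phi1d : forall i, phi1 (M i i) by move=> i; rewrite Hdiag /phi1 vk1.
have phi2d : forall i, phi2 (M i i) = false by move=> i; rewrite Hdiag /phi2 vk1.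
pose R i := \big[addb/false]_(t in S) phi1 (M i t).
pose T := \big[addb/false]_(t in S) phi1 (M m t).
have key : forall i, i \in S -> phi1 (M m i) = R i (+) T (+) true.
  move=> i iS.
  have im : i != m by apply: contraTneq iS => ->; rewrite mS.
  have := Hsp [set i; m]; rewrite cards2 im /=.
  set X := symdiff _ _.
  have -> : X :&: S = [set t in S | t \in X] by apply/setP => t; rewrite !inE andbC.
  rewrite -sumodd (bigD1 i) //=.
  have -> : (i \in X) = true.
    rewrite /X /symdiff !inE eq_refl /= eq_k1 phi2_sum big_setU1 /= ?big_set1 ?inE //.
    by rewrite phi2d phi2off 1?eq_sym //= andbF.
  rewrite (eq_bigr (fun t => phi1 (M i t) (+) phi1 (M m t))); last first.
    move=> t /andP[tS ti].
    have tm : t != m by apply: contraTneq tS => ->; rewrite mS.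
    rewrite /X /symdiff !inE (negbTE ti) (negbTE tm) /= eq_k1 phi1_sum phi2_sum andbF orbF.
    rewrite big_setU1 /= ?big_set1 ?inE // big_setU1 /= ?big_set1 ?inE //.
    rewrite (phi2off i t) 1?eq_sym // (phi2off m t) 1?eq_sym //=.
    by rewrite andbT.
  rewrite big_split /= /R /T => H.
  rewrite (bigD1 i iS) (bigD1 i iS) /= phi1d; move: H.
  set b1 := \big[addb/false]_(_ | _) _; set b2 := \big[addb/false]_(_ | _) _.
  by case: (phi1 (M m i)); case: b1; case: b2.
have phi2rS : forall i, i \in S -> phi2 (rS M S i) = ~~ odd #|S|.
  move=> i iS; rewrite /rS phi2_sum (eq_bigr (fun t => t != i)); last first.
    move=> t _; case: (eqVneq t i) => [->|ti]; first by rewrite phi2d.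
    by rewrite phi2off // eq_sym.
  rewrite sumodd (cardsD1 i S) iS.
  have -> : [set t in S | t != i] = S :\ i by apply/setP => t; rewrite !inE andbC.
  by rewrite add1n /= negbK.
have phi1rS : forall i, phi1 (rS M S i) = R i by move=> i; rewrite /rS phi1_sum.
have mt : forall t : 'I_n, t \in S -> phi1 (M m t) = if (t < k)%N then T else ~~ T.
  move=> t tS; rewrite key //.
  have kp : (0 < k)%N by move: tS; rewrite inS; lia.
  have n0 : (0 < n)%N := leq_ltn_trans (leq0n t) (ltn_ord t).
  pose i0 : 'I_n := Ordinal n0.
  have i0S : i0 \in S by rewrite inS /=; lia.
  have Ri0 : R i0 = true.
    rewrite /R (bigD1 i0 i0S) /= phi1d big1 // => u /andP[_ ui].
    rewrite (Hrow0 i0 u) //; case: eqP => [h|_]; last by rewrite /phi1 vk2.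
    by case/eqP: ui; apply: val_inj.
  case: ifP => tk.
    have -> : R t = true by rewrite -phi1rS (HrA t i0 tk kp) phi1rS.
    by case: (T).
  have tB : (k <= t < k + l)%N by move/negbT: tk; rewrite -leqNgt => ->; rewrite -inS.
  have -> : R t = false.
    apply/negP => Rt; move: (HrAB i0 t kp tB) => /eqP; apply.
    apply: phi_inj; first by rewrite !phi1rS Ri0 Rt.
    by rewrite !phi2rS.
  by case: (T).
have Teq : T = (odd k && T) (+) (odd l && ~~ T).
  set g := fun u : nat => if (u < k)%N then T else ~~ T.
  transitivity (\big[addb/false]_(t in S) g t).
    by apply: eq_bigr => t tS; rewrite mt.
  rewrite (eq_bigl (fun t : 'I_n => (t < k+l)%N)); last by move=> t; rewrite inS.
  rewrite -(big_ord_widen n g); last by rewrite Hn leq_addr.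
  rewrite -(big_mkord xpredT) (@big_cat_nat _ _ _ k 0 (k+l) _ _ (leq0n k) (leq_addr l k)) /=.
  rewrite (@eq_big_nat _ false addb 0 k g (fun=> T)); last by move=> u /andP[_ h]; rewrite /g h.
  rewrite (@eq_big_nat _ false addb k (k+l) g (fun=> ~~T)); last first.
    by move=> u /andP[h _]; rewrite /g ltnNge h.
  by rewrite !big_const_nat !iter_addb subn0 addKn.
exists (if T then k3 else k2); split; first by case: (T); [right|left].
split.
  move=> j jk; have jS : j \in S by rewrite inS; lia.
  have mj : m != j by apply: contraTneq jS => <-; rewrite mS.
  by rewrite (phi1off m j mj) (mt j jS) jk.
split.
  move=> j jB; have jS : j \in S by rewrite inS; lia.
  have mj : m != j by apply: contraTneq jS => <-; rewrite mS.
  rewrite (phi1off m j mj) (mt j jS) ltnNge (andP jB).1 /=.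
  by case: (T); rewrite /kconj ?vk2 ?vk3.
rewrite /kmulz !absz_nat odd_klz //.
move: Teq; case: (T); case: (odd k); case: (odd l) => //= _;
  apply: val_inj; rewrite /kconj !val_kadd ?vk0 ?vk2 ?vk3 /= ?vk0 ?vk2 ?vk3 //.
Qed.
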